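(* Let $\mathcal G$ be a connected undirected graph on vertices $\{1,\dots,n\}$ with $m$ edges, where each edge $\{i,j\}$ carries $\beta_{ij}<0$ and $V_i>0$ for each vertex. Let $R\in\mathbb R^{n\times m}$ be the incidence matrix of $\mathcal G$ for an arbitrary orientation, $\Gamma=\mathrm{diag}(\gamma_k)$ with $\gamma_k=|\beta_{ij}|V_iV_j$ for edge $k\sim\{i,j\}$, and let $\sigma_i>0$ satisfy $\sum_{j\in\mathcal N_i}|\beta_{ij}|V_iV_j\le\frac12\sigma_i$ for each $i$, where $\mathcal N_i$ is the set of neighbors of $i$. With $\Sigma=\mathrm{diag}(\sigma_i)$, it holds that $\Gamma^{-1}-R^{\top}\Sigma^{-1}R\succeq0$.
   Context: Incidence matrix: $R_{ik}=1$ if vertex $i$ is the sink of edge $k$, $R_{ik}=-1$ if it is the source, and $R_{ik}=0$ otherwise. $\succeq0$ denotes positive semidefiniteness. *)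

(* Defs.v *)
From HB Require Import structures.
From mathcomp Require Import all_boot all_order all_algebra.
Set Implicit Arguments. Unset Strict Implicit. Unset Printing Implicit Defensive.
Import Order.TTheory GRing.Theory Num.Theory.
Local Open Scope ring_scope.

Definition incidence (R : ringType) (n m : nat) (src snk : 'I_m -> 'I_n)
  : 'M[R]_(n, m) :=
  \matrix_(i < n, k < m)
    (if i == snk k then 1 else if i == src k then -1 else 0).

Definition psd (R : numDomainType) (m : nat) (M : 'M[R]_m) : Prop :=
  M^T = M /\ forall x : 'cV[R]_m, 0 <= (x^T *m M *m x) 0 0.

Definition simple_graph (n : nat) (adj : rel 'I_n) : Prop :=
  (forall i, ~~ adj i i) /\ (forall i j, adj i j = adj j i).

Definition connected_graph (n : nat) (adj : rel 'I_n) : Prop :=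
  forall i j, connect adj i j.

Definition edge_enumeration (n m : nat) (adj : rel 'I_n)
  (src snk : 'I_m -> 'I_n) : Prop :=
  [/\ forall k, adj (src k) (snk k),
      forall k l, (src k = src l /\ snk k = snk l) \/
                  (src k = snk l /\ snk k = src l) -> k = l
    & forall i j, adj i j -> exists k,
          (src k = i /\ snk k = j) \/ (src k = j /\ snk k = i)].

(* Main.v *)
Require Import Defs.
From HB Require Import structures.
From mathcomp Require Import all_boot all_order all_algebra.
From mathcomp Require Import ring lra.
Import Order.TTheory GRing.Theory Num.Theory.
Local Open Scope ring_scope.

Lemma diag_inv (F : fieldType) n (d : 'rV[F]_n) :
  (forall i, d 0 i != 0) -> invmx (diag_mx d) = diag_mx (\row_i (d 0 i)^-1).
Proof.
move=> nz.
have H : diag_mx d *m diag_mx (\row_i (d 0 i)^-1) = 1%:M.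
  rewrite mulmx_diag; apply/matrixP => i j; rewrite !mxE.
  case: eqP => // _; by rewrite mulfV.
have [U _] := mulmx1_unit H.
by rewrite -[RHS](mulKmx U) H mulmx1.
Qed.

Lemma quad_diag (R : comNzRingType) n (d : 'rV[R]_n) (y : 'cV[R]_n) :
  (y^T *m diag_mx d *m y) 0 0 = \sum_i d 0 i * y i 0 ^+ 2.
Proof.
rewrite mul_mx_diag !mxE; apply: eq_bigr => i _; rewrite !mxE; ring.
Qed.

Lemma CS (R : realFieldType) (I : finType) (P : pred I) (u w : I -> R) :
  (forall k, P k -> 0 < w k) ->
  (\sum_(k | P k) u k) ^+ 2 <= (\sum_(k | P k) w k) * \sum_(k | P k) u k ^+ 2 / w k.
Proof.
move=> wp.
rewrite expr2 mulr_suml mulr_suml.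
have E1 : \sum_(i | P i) u i * (\sum_(k | P k) u k) = \sum_(i | P i) \sum_(k | P k) u i * u k.
  by apply: eq_bigr => i _; rewrite mulr_sumr.
have E2 : \sum_(i | P i) w i * (\sum_(k | P k) u k ^+ 2 / w k) = \sum_(i | P i) \sum_(k | P k) w i * (u k ^+ 2 / w k).
  by apply: eq_bigr => i _; rewrite mulr_sumr.
rewrite E1 E2.
rewrite -(ler_pM2l (ltr0Sn R 1)) !mulr_natl !mulr2n.
rewrite {2}exchange_big {2}(exchange_big _ _ _ _ _ (fun i k => w i * (u k ^+ 2 / w k))) /=.
rewrite -!big_split /=; apply: ler_sum => i Pi; rewrite -!big_split /=; apply: ler_sum => k Pk.
have wi := wp i Pi; have wk := wp k Pk.
have key : 0 <= (u i * w k - u k * w i) ^+ 2 / (w i * w k).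
  by apply: divr_ge0; [apply: sqr_ge0 | apply: mulr_ge0; apply: ltW].
have -> : w i * (u k ^+ 2 / w k) + w k * (u i ^+ 2 / w i) =
   u i * u k + u k * u i + (u i * w k - u k * w i) ^+ 2 / (w i * w k).
  field; apply/andP; split; apply: lt0r_neq0 => //.
by rewrite lerDl.
Qed.
Theorem lemma3 (R : realFieldType) (n m : nat) (adj : rel 'I_n)
  (src snk : 'I_m -> 'I_n) (beta : 'I_n -> 'I_n -> R) (V sigma : 'I_n -> R) :
  simple_graph adj ->
  connected_graph adj ->
  edge_enumeration adj src snk ->
  (forall i j, beta i j = beta j i) ->
  (forall i j, adj i j -> beta i j < 0) ->
  (forall i, 0 < V i) ->
  (forall i, 0 < sigma i) ->
  (forall i, \sum_(j | adj i j) `|beta i j| * V i * V j <= sigma i / 2) ->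
  let gamma := fun k : 'I_m =>
    `|beta (src k) (snk k)| * V (src k) * V (snk k) in
  let Gam := diag_mx (\row_k gamma k) in
  let Sig := diag_mx (\row_i sigma i) in
  let Rinc := incidence R src snk in
  psd (invmx Gam - Rinc^T *m invmx Sig *m Rinc).
Proof.
move=> [irr asym] _ [eadj einj esurj] bsym bneg Vp sp hsum gamma Gam Sig Rinc.
have gp : forall k, 0 < gamma k.
  move=> k; rewrite /gamma; apply: mulr_gt0; last exact: Vp.
  apply: mulr_gt0; last exact: Vp.
  by rewrite normr_gt0; apply: ltr0_neq0; apply: bneg.
have neq : forall k, src k != snk k.
  move=> k; apply/eqP => e; have := eadj k; rewrite e; by move: (irr (snk k)) => /negbTE ->.
have -> : invmx Gam = diag_mx (\row_k (gamma k)^-1).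
  rewrite diag_inv; last by move=> k; rewrite mxE; apply: lt0r_neq0.
  by congr diag_mx; apply/matrixP => i j; rewrite !mxE.
have -> : invmx Sig = diag_mx (\row_i (sigma i)^-1).
  rewrite diag_inv; last by move=> k; rewrite mxE; apply: lt0r_neq0.
  by congr diag_mx; apply/matrixP => i j; rewrite !mxE.
split.
  by rewrite linearB /= tr_diag_mx !trmx_mul trmxK tr_diag_mx mulmxA.
move=> x.
rewrite mulmxBr mulmxBl.
have E3 : x^T *m (Rinc^T *m diag_mx (\row_i (sigma i)^-1) *m Rinc) *m x
   = (Rinc *m x)^T *m diag_mx (\row_i (sigma i)^-1) *m (Rinc *m x).
  by rewrite trmx_mul !mulmxA.
rewrite E3 (_ : forall A B : 'M[R]_1, (A - B) 0 0 = A 0 0 - B 0 0); last by move=> A B; rewrite !mxE.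
rewrite subr_ge0 !quad_diag.
set c := fun k => x k 0 ^+ 2 / gamma k.
set P := fun i => [set k | (src k == i) || (snk k == i)].
have step : forall i, (\row_i0 (sigma i0)^-1) 0 i * (Rinc *m x) i 0 ^+ 2
                <= (\sum_(k in P i) c k) / 2.
  move=> i; rewrite mxE.
  have ey : (Rinc *m x) i 0 = \sum_(k in P i) (Rinc i k * x k 0).
    rewrite mxE [RHS]big_mkcond; apply: eq_bigr => k _; rewrite inE; case: ifP => // h.
    move/negbT: h; rewrite negb_or => /andP[h1 h2]; rewrite eq_sym in h1; rewrite eq_sym in h2.
    by rewrite /Rinc mxE (negbTE h1) (negbTE h2) mul0r.
  have cs := @CS R _ (fun k => k \in P i) (fun k => Rinc i k * x k 0) gamma (fun k _ => gp k).
  have eu : \sum_(k in P i) (Rinc i k * x k 0) ^+ 2 / gamma k = \sum_(k in P i) c k.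
    apply: eq_bigr => k; rewrite inE => /orP h; rewrite /Rinc mxE exprMn /c.
    case: eqP => [_|ne]; first by rewrite expr1n mul1r.
    rewrite ifT; first by rewrite sqrrN expr1n mul1r.
    by case: h => /eqP e; [rewrite e eqxx | by exfalso; apply: ne].
  set o := fun k => if src k == i then snk k else src k.
  have oadj : forall k, k \in P i -> adj i (o k).
    move=> k; rewrite inE /o; case: eqP => [<- _|ne /= /eqP <-]; first exact: eadj.
    by rewrite asym; exact: eadj.
  have og : forall k, k \in P i -> gamma k = `|beta i (o k)| * V i * V (o k).
    move=> k; rewrite inE /o /gamma; case: eqP => [<- _|ne /= /eqP <-] //.
    by rewrite bsym mulrAC.
  have oinj : {in P i &, injective o}.
    move=> k l; rewrite !inE /o; case: eqP => ek /= hk; case: eqP => el /= hl e; apply: einj;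
    (try move/eqP in hk); (try move/eqP in hl);
    first [left; split; congruence | right; split; congruence].
  have gs : \sum_(k in P i) gamma k <= sigma i / 2.
    apply: le_trans (hsum i).
    rewrite (eq_bigr (fun k => `|beta i (o k)| * V i * V (o k))); last exact: og.
    rewrite -(big_imset (fun j => `|beta i j| * V i * V j) oinj) /=.
    rewrite [X in _ <= X]big_mkcond [X in X <= _]big_mkcond /=; apply: ler_sum => j _.
    case: ifP => hj.
      have -> : adj i j by case/imsetP: hj => k kP ->; exact: oadj.
      exact: lexx.
    case: ifP => _ //.
    apply: mulr_ge0; [apply: mulr_ge0; [exact: normr_ge0 | exact: ltW (Vp i)] | exact: ltW (Vp j)].
  have Sc : 0 <= \sum_(k in P i) c k.
    apply: sumr_ge0 => k _; apply: divr_ge0; [exact: sqr_ge0 | exact: ltW].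
  rewrite ey; rewrite eu in cs.
  have c2 : (\sum_(k in P i) Rinc i k * x k 0) ^+ 2 <= sigma i / 2 * \sum_(k in P i) c k.
    by apply: le_trans cs _; apply: ler_wpM2r.
  have c3 : (sigma i)^-1 * (\sum_(k in P i) Rinc i k * x k 0) ^+ 2 <= (sigma i)^-1 * (sigma i / 2 * \sum_(k in P i) c k).
    by rewrite ler_wpM2l // invr_ge0 ltW.
  apply: le_trans c3 _.
  rewrite le_eqVlt; apply/orP; left; apply/eqP; field.
  exact: lt0r_neq0 (sp i).
apply: le_trans (ler_sum _ (fun i _ => step i)) _.
rewrite -mulr_suml.
have -> : \sum_i \sum_(k in P i) c k = \sum_k c k *+ 2.
  rewrite (eq_bigr (fun i => \sum_k (if k \in P i then c k else 0))); last by move=> i _; rewrite big_mkcond.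
  rewrite exchange_big /=; apply: eq_bigr => k _.
  rewrite (bigD1 (src k)) //= (bigD1 (snk k)) /=; last by rewrite eq_sym neq.
  rewrite big1; last first.
    move=> i /andP [ni1 ni2]; rewrite inE; case: ifP => //.
    by case/orP => /eqP e; [move: ni1 | move: ni2]; rewrite e eqxx.
  by rewrite !inE !eqxx orbT addr0 mulr2n.
rewrite mulr_suml; apply: ler_sum => k _; rewrite mxE /c.
rewrite -mulr_natr -mulrA divff ?pnatr_eq0 // mulr1 mulrC.
exact: lexx.
Qed.
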